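(* Let $\theta_1,\dots,\theta_{10}$ be real numbers such that $0<\theta_i<\theta_j<\theta_k<180$ for each of the triples $(i,j,k)\in\{(2,4,6),(1,5,9),(1,5,10),(1,5,7),(1,3,7),(1,4,7),(3,5,8),(2,8,9),(6,7,10)\}$, and write $s_{ij}=\sin(\theta_j-\theta_i)$. Suppose $$s_{89}\,s_{1,10}\,s_{24}\,s_{35}\,s_{67}+s_{46}\,s_{19}\,s_{7,10}\,s_{35}\,s_{28}-s_{46}\,s_{38}\,s_{7,10}\,s_{29}\,s_{15}<0 .$$ Then there is no $\mathbf r=(r_1,\dots,r_{10})\in\mathbb{R}^{10}$ satisfying simultaneously the nine strict inequalities $$r_is_{jk}-r_js_{ik}+r_ks_{ij}>0\quad\text{for }(i,j,k)\in\{(2,4,6),(1,5,9),(1,5,10),(1,5,7)\},$$ $$-r_is_{jk}+r_js_{ik}-r_ks_{ij}>0\quad\text{for }(i,j,k)\in\{(1,3,7),(1,4,7),(3,5,8),(2,8,9),(6,7,10)\}.$$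
   Context: Angles are in degrees. *)

(* Defs.v *)
From Stdlib Require Import Reals.
Open Scope R_scope.

Definition sind (x : R) : R := sin (x * PI / 180).

Definition s (th : nat -> R) (i j : nat) : R := sind (th j - th i).

Definition L (th r : nat -> R) (i j k : nat) : R :=
  r i * s th j k - r j * s th i k + r k * s th i j.

Definition ord3 (th : nat -> R) (i j k : nat) : Prop :=
  0 < th i /\ th i < th j /\ th j < th k /\ th k < 180.

(* Main.v *)
Require Import Defs.
From Stdlib Require Import Reals Lra.
Open Scope R_scope.

Lemma s_exp th i j : s th i j =
  sin (th j * PI / 180) * cos (th i * PI / 180) - cos (th j * PI / 180) * sin (th i * PI / 180).
Proof.
  unfold s, sind. rewrite <- sin_minus. apply (f_equal sin). field.
Qed.

Lemma s_pos th i j : 0 < th i -> th i < th j -> th j < 180 -> 0 < s th i j.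
Proof.
  intros. unfold s, sind. apply sin_gt_0.
  - apply Rmult_lt_0_compat; [|lra]. apply Rmult_lt_0_compat; [lra|apply PI_RGT_0].
  - assert (HP := PI_RGT_0).
    apply Rlt_le_trans with (1 * PI); [|lra].
    unfold Rdiv. rewrite Rmult_assoc, (Rmult_comm PI), <- Rmult_assoc.
    apply Rmult_lt_compat_r; [exact HP|]. apply (Rmult_lt_reg_r 180); [lra|].
    rewrite Rmult_assoc, Rinv_l by lra. lra.
Qed.

Lemma ident th r :
  let E := s th 8 9 * s th 1 10 * s th 2 4 * s th 3 5 * s th 6 7
  + s th 4 6 * s th 1 9 * s th 7 10 * s th 3 5 * s th 2 8
  - s th 4 6 * s th 3 8 * s th 7 10 * s th 2 9 * s th 1 5 in
  (s th 8 9 * s th 3 5 * s th 1 5 * s th 7 10 * s th 1 7) * L th r 2 4 6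
  + (s th 4 6 * s th 3 5 * s th 2 8 * s th 7 10 * s th 1 7) * L th r 1 5 9
  + (s th 8 9 * s th 3 5 * s th 2 4 * s th 6 7 * s th 1 7) * L th r 1 5 10
  + (- E) * L th r 1 5 7
  + (s th 4 6 * s th 2 9 * s th 1 5 * s th 7 10 * s th 5 8) * (- L th r 1 3 7)
  + (s th 8 9 * s th 3 5 * s th 1 5 * s th 7 10 * s th 2 6) * (- L th r 1 4 7)
  + (s th 4 6 * s th 2 9 * s th 1 5 * s th 7 10 * s th 1 7) * (- L th r 3 5 8)
  + (s th 4 6 * s th 3 5 * s th 1 5 * s th 7 10 * s th 1 7) * (- L th r 2 8 9)
  + (s th 8 9 * s th 3 5 * s th 1 5 * s th 2 4 * s th 1 7) * (- L th r 6 7 10) = 0.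
Proof.
  intros E; unfold E, L. rewrite !s_exp. ring.
Qed.

Theorem lemmal (th : nat -> R) :
  ord3 th 2 4 6 -> ord3 th 1 5 9 -> ord3 th 1 5 10 -> ord3 th 1 5 7 ->
  ord3 th 1 3 7 -> ord3 th 1 4 7 -> ord3 th 3 5 8 -> ord3 th 2 8 9 ->
  ord3 th 6 7 10 ->
  s th 8 9 * s th 1 10 * s th 2 4 * s th 3 5 * s th 6 7
  + s th 4 6 * s th 1 9 * s th 7 10 * s th 3 5 * s th 2 8
  - s th 4 6 * s th 3 8 * s th 7 10 * s th 2 9 * s th 1 5 < 0 ->
  ~ (exists r : nat -> R,
       L th r 2 4 6 > 0 /\ L th r 1 5 9 > 0 /\ L th r 1 5 10 > 0 /\
       L th r 1 5 7 > 0 /\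
       - L th r 1 3 7 > 0 /\ - L th r 1 4 7 > 0 /\ - L th r 3 5 8 > 0 /\
       - L th r 2 8 9 > 0 /\ - L th r 6 7 10 > 0).
Proof.
  unfold ord3; intros O1 O2 O3 O4 O5 O6 O7 O8 O9 HE [r (F1&F2&F3&F4&F5&F6&F7&F8&F9)].
  pose proof (ident th r) as Id; simpl in Id.
  assert (P89 : 0 < s th 8 9) by (apply s_pos; lra).
  assert (P35 : 0 < s th 3 5) by (apply s_pos; lra).
  assert (P15 : 0 < s th 1 5) by (apply s_pos; lra).
  assert (P710 : 0 < s th 7 10) by (apply s_pos; lra).
  assert (P17 : 0 < s th 1 7) by (apply s_pos; lra).
  assert (P46 : 0 < s th 4 6) by (apply s_pos; lra).
  assert (P28 : 0 < s th 2 8) by (apply s_pos; lra).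
  assert (P24 : 0 < s th 2 4) by (apply s_pos; lra).
  assert (P67 : 0 < s th 6 7) by (apply s_pos; lra).
  assert (P29 : 0 < s th 2 9) by (apply s_pos; lra).
  assert (P58 : 0 < s th 5 8) by (apply s_pos; lra).
  assert (P26 : 0 < s th 2 6) by (apply s_pos; lra).
  Ltac pp := repeat (apply Rmult_lt_0_compat); assumption.
  assert (0 < (s th 8 9 * s th 3 5 * s th 1 5 * s th 7 10 * s th 1 7) * L th r 2 4 6) by pp.
  assert (0 < (s th 4 6 * s th 3 5 * s th 2 8 * s th 7 10 * s th 1 7) * L th r 1 5 9) by pp.
  assert (0 < (s th 8 9 * s th 3 5 * s th 2 4 * s th 6 7 * s th 1 7) * L th r 1 5 10) by pp.
  assert (0 < (- (s th 8 9 * s th 1 10 * s th 2 4 * s th 3 5 * s th 6 7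
  + s th 4 6 * s th 1 9 * s th 7 10 * s th 3 5 * s th 2 8
  - s th 4 6 * s th 3 8 * s th 7 10 * s th 2 9 * s th 1 5)) * L th r 1 5 7)
    by (apply Rmult_lt_0_compat; lra).
  assert (0 < (s th 4 6 * s th 2 9 * s th 1 5 * s th 7 10 * s th 5 8) * (- L th r 1 3 7)) by pp.
  assert (0 < (s th 8 9 * s th 3 5 * s th 1 5 * s th 7 10 * s th 2 6) * (- L th r 1 4 7)) by pp.
  assert (0 < (s th 4 6 * s th 2 9 * s th 1 5 * s th 7 10 * s th 1 7) * (- L th r 3 5 8)) by pp.
  assert (0 < (s th 4 6 * s th 3 5 * s th 1 5 * s th 7 10 * s th 1 7) * (- L th r 2 8 9)) by pp.
  assert (0 < (s th 8 9 * s th 3 5 * s th 1 5 * s th 2 4 * s th 1 7) * (- L th r 6 7 10)) by pp.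
  lra.
Qed.
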